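(* Let $K\ge2$ and consider a random point process on a discrete circle with holes indexed $1,2,\dots,K$ in clockwise order (each hole contains at most one particle), whose law is invariant under rotation, and such that $M:=\mathbb P(\text{there is a particle at hole }K)>0$. Define: $W\in\{1,\dots,K\}$, the smallest index $l$ such that hole $l$ contains a particle; $\mathrm{Sp}_1\in\{1,\dots,K\}$, the length of the arc through hole $K$ between the two consecutive particles surrounding it, namely the first particle clockwise strictly after hole $K$ and the last particle at or counterclockwise before hole $K$; and $\mathrm{Sp}_2\in\{1,\dots,K\}$, defined on the event that hole $K$ contains a particle, as the clockwise distance from hole $K$ to the next hole containing a particle. Let $g(L)=\mathbb P(W=L)$, $f_1(L)=\mathbb P(\mathrm{Sp}_1=L)$, $f_2(L)=\mathbb P(\mathrm{Sp}_2=L\mid\text{particle at hole }K)$, and $\Delta g(L)=g(L+1)-g(L)$ (with $g(K+1)=0$). Then for all $L\in\{1,\dots,K\}$, $$-\Delta g(L)\cdot L=f_1(L),\qquad -\Delta g(L)=M\cdot f_2(L).$$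
   Context: Distances are measured in numbers of steps between adjacent holes along the circle (adjacent holes are at distance 1). If hole $K$ is the only occupied hole, $\mathrm{Sp}_1=\mathrm{Sp}_2=W=K$. *)

(* Defs.v *)
(* a point process on K holes = probability distribution
   on the finite set of configurations {ffun 'I_K -> bool}. *)
From mathcomp Require Import all_boot all_order all_algebra.
Set Implicit Arguments. Unset Strict Implicit. Unset Printing Implicit Defensive.
Import Order.TTheory GRing.Theory Num.Theory.
Local Open Scope ring_scope.

(* A configuration: which of the K holes are occupied.
   Hole h (1 <= h <= K) is stored at ordinal index (h %% K): hole K <-> index 0,
   hole l <-> index l for 1 <= l < K. *)
Definition config (K : nat) := {ffun 'I_K -> bool}.

Definition occ (K : nat) (c : config K) (h : nat) : bool :=
  [exists i : 'I_K, (val i == (h %% K)%N) && c i].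

Definition nonempty (K : nat) (c : config K) : bool := [exists i : 'I_K, c i].

Definition rotc (K : nat) (c : config K) : config K :=
  [ffun i : 'I_K => occ c (val i + 1)].

(* W: smallest l in {1..K} such that hole l is occupied (K+1 if none) *)
Definition W (K : nat) (c : config K) : nat :=
  (find (occ c) (iota 1 K)).+1.

Definition back_dist (K : nat) (c : config K) : nat :=
  find (fun b => occ c (K - b)) (iota 0 K).

(* Sp1: the first particle clockwise strictly after hole K is at distance W c
   from hole K; the last particle at or before hole K is at distance back_dist *)
Definition Sp1 (K : nat) (c : config K) : nat := W c + back_dist c.

Definition Sp2 (K : nat) (c : config K) : nat :=
  (find (fun a => occ c (K + a)) (iota 1 K)).+1.

Definition prob (R : numDomainType) (K : nat) (P : {ffun config K -> R})
  (E : pred (config K)) : R := \sum_(c : config K | E c) P c.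

Definition g (R : numDomainType) (K : nat) (P : {ffun config K -> R}) (L : nat) : R :=
  prob P (fun c => nonempty c && (W c == L)).

Definition f1 (R : numDomainType) (K : nat) (P : {ffun config K -> R}) (L : nat) : R :=
  prob P (fun c => nonempty c && (Sp1 c == L)).

Definition M (R : numDomainType) (K : nat) (P : {ffun config K -> R}) : R :=
  prob P (fun c => occ c K).

Definition f2 (R : numFieldType) (K : nat) (P : {ffun config K -> R}) (L : nat) : R :=
  prob P (fun c => occ c K && (Sp2 c == L)) / M P.

(* Main.v *)
Require Import Defs.
From mathcomp Require Import all_boot all_order all_algebra.
From mathcomp Require Import zify.
Import Order.TTheory GRing.Theory Num.Theory.
Local Open Scope ring_scope.

Local Close Scope ring_scope.
Set Implicit Arguments. Unset Strict Implicit.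

Lemma occE K (hK : 0 < K) (c : config K) h :
  occ c h = c (Ordinal (ltn_pmod h hK)).
Proof.
apply/existsP/idP.
  case=> i /andP[/eqP hi ci].
  by have -> : Ordinal (ltn_pmod h hK) = i by apply: val_inj; rewrite /= hi.
by move=> ci; exists (Ordinal (ltn_pmod h hK)); rewrite /= eqxx.
Qed.

Lemma occ_mod K (c : config K) h : occ c (h %% K) = occ c h.
Proof. by rewrite /occ modn_mod. Qed.

Lemma occ_addK K (c : config K) h : occ c (K + h) = occ c h.
Proof. by rewrite -occ_mod modnDl occ_mod. Qed.

Lemma occ_ord K (c : config K) (i : 'I_K) : occ c i = c i.
Proof.
have hK : 0 < K by case: i => /= j; case: K {c} => //.
rewrite (occE hK); congr (c _); apply: val_inj => /=; exact: modn_small.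
Qed.

Lemma occ_rot K (hK : 0 < K) (c : config K) h : occ (rotc c) h = occ c h.+1.
Proof.
rewrite (occE hK) /rotc ffunE /= -occ_mod modnDml occ_mod.
by rewrite addn1.
Qed.

Lemma occ_eq K (c : config K) x y : x = y -> occ c x = occ c y.
Proof. by move=> ->. Qed.

Definition rotc' K (c : config K) : config K :=
  [ffun i : 'I_K => occ c (val i + K.-1)].

Lemma rotc_inj K (hK : 0 < K) : injective (@rotc K).
Proof.
apply: (can_inj (g := @rotc' K)) => c; apply/ffunP => i.
rewrite /rotc' ffunE occ_rot // -occ_ord.
have -> : (i + K.-1).+1 = K + i by lia.
by rewrite occ_addK.
Qed.

Lemma find_iotaP (p : pred nat) a n k : k < n ->
  reflect ((forall j, j < k -> ~~ p (a + j)) /\ p (a + k))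
          (find p (iota a n) == k).
Proof.
move=> kn; apply: (iffP eqP).
  move=> hf; have hs : has p (iota a n) by rewrite has_find size_iota hf.
  split.
    move=> j jk; rewrite -(nth_iota 0 a (n:=n)); last by lia.
    by rewrite before_find // hf.
  have := nth_find 0 hs; rewrite hf nth_iota //.
move=> [hb hp].
have hs : has p (iota a n).
  by apply/hasP; exists (a + k) => //; rewrite mem_iota; lia.
have fs : find p (iota a n) < n by move: hs; rewrite has_find size_iota.
case: (ltngtP (find p (iota a n)) k) => // h.
  have := nth_find 0 hs; rewrite nth_iota // => hp'.
  by have := hb _ h; rewrite hp'.
have := before_find 0 h; rewrite nth_iota // hp //.
Qed.

Definition E K s L (c : config K) : bool :=
  [forall j : 'I_L, (0 < j) ==> ~~ occ c (s + j)] && occ c (s + L).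

Definition F K s L (c : config K) : bool := E s L c && occ c s.

Lemma EP K s L (c : config K) :
  reflect ((forall j, 0 < j < L -> ~~ occ c (s + j)) /\ occ c (s + L)) (E s L c).
Proof.
apply: (iffP andP) => -[h1 h2]; split => //.
  move=> j /andP[j0 jL]; exact: (implyP (forallP h1 (Ordinal jL)) j0).
by apply/forallP => j; apply/implyP => j0; apply: h1; rewrite j0 ltn_ord.
Qed.

Lemma E_rot K (hK : 0 < K) s L (c : config K) : E s L (rotc c) = E s.+1 L c.
Proof.
apply/EP/EP => -[h1 h2]; split.
- by move=> j hj; have := h1 j hj; rewrite occ_rot // addSn.
- by move: h2; rewrite occ_rot // addSn.
- by move=> j hj; rewrite occ_rot // -addSn; apply: h1.
- by rewrite occ_rot // -addSn.
Qed.

Lemma F_rot K (hK : 0 < K) s L (c : config K) : F s L (rotc c) = F s.+1 L c.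
Proof. by rewrite /F E_rot // occ_rot. Qed.

Lemma nonempty_occ K (hK : 0 < K) (c : config K) h : occ c h -> nonempty c.
Proof. by rewrite (occE hK) => hc; apply/existsP; eexists; exact: hc. Qed.

Lemma W_E K (hK : 0 < K) (c : config K) L : 0 < L <= K ->
  (nonempty c && (W c == L)) = E 0 L c.
Proof.
move=> /andP[L0 LK].
have -> : (W c == L) = (find (occ c) (iota 1 K) == L.-1).
  by rewrite /W; case: (L) L0 => // L' _; rewrite eqSS.
apply/idP/EP.
  case/andP=> _ /(find_iotaP _ _ _) => /(_ ltac:(lia)) -[h1 h2]; split.
    move=> j hj; rewrite add0n; have := h1 j.-1 ltac:(lia).
    by have -> : 1 + j.-1 = j by lia.
  by move: h2; rewrite add0n; have -> : 1 + L.-1 = L by lia.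
move=> [h1 h2]; rewrite (nonempty_occ hK h2) /=.
apply/find_iotaP; first lia; split.
  by move=> j hj; have := h1 j.+1 ltac:(lia); rewrite add0n add1n.
by move: h2; rewrite add0n; have -> : 1 + L.-1 = L by lia.
Qed.

Lemma W_le K (hK : 0 < K) (c : config K) : nonempty c -> W c <= K.
Proof.
case/existsP=> i ci.
have hs : has (occ c) (iota 1 K).
  apply/hasP; exists (if nat_of_ord i == 0 then K else nat_of_ord i).
    rewrite mem_iota; case: eqP => h0; have := ltn_ord i; lia.
  case: eqP => h; last by rewrite occ_ord.
  by rewrite -occ_mod modnn -h occ_ord.
by move: hs; rewrite has_find size_iota /W.
Qed.

Lemma E_K1 K (hK : 0 < K) (c : config K) : E 0 K.+1 c = false.
Proof.
apply/negP => /EP -[h1 h2].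
have := h1 1 ltac:(lia); rewrite add0n.
by move: h2; rewrite add0n -addn1 occ_addK => ->.
Qed.

Lemma back_lt K (c : config K) L : Sp1 c == L -> back_dist c < L.
Proof. by rewrite /Sp1 /W => /eqP <-; rewrite addSn ltnS leq_addl. Qed.

Lemma Sp1_F K (hK : 0 < K) (c : config K) L b : b < L -> L <= K ->
  (nonempty c && (Sp1 c == L) && (back_dist c == b)) = F (K - b) L c.
Proof.
move=> bL LK; apply/idP/andP.
  case/andP=> /andP[_ hS] hb.
  move/(find_iotaP _ _ _): (hb) => /(_ ltac:(lia)) -[b1 b2].
  move/eqP: hb => hb.
  have hW : find (occ c) (iota 1 K) == L - b - 1.
    by move: hS; rewrite /Sp1 /W hb => /eqP <-; apply/eqP; lia.
  move/(find_iotaP _ _ _): hW => /(_ ltac:(lia)) -[w1 w2].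
  split; last by move: b2; rewrite add0n.
  apply/EP; split.
    move=> j hj; case: (leqP j b) => jb.
      have := b1 (b - j) ltac:(lia).
      by have -> : K - (0 + (b - j)) = K - b + j by lia.
    have := w1 (j - b - 1) ltac:(lia).
    rewrite -(occ_addK c (1 + _)).
    by have -> : K + (1 + (j - b - 1)) = K - b + j by lia.
  move: w2; rewrite -(occ_addK c (1 + _)).
  by have -> : K + (1 + (L - b - 1)) = K - b + L by lia.
case=> /EP [h1 h2] h3.
rewrite (nonempty_occ hK h3) /=.
have hb : back_dist c == b.
  apply/find_iotaP; first lia; split; last by rewrite add0n.
  move=> j jb; have := h1 (b - j) ltac:(lia).
  by have -> : K - b + (b - j) = K - (0 + j) by lia.
rewrite hb andbT /Sp1 (eqP hb) /W.
have hW : find (occ c) (iota 1 K) == L - b - 1.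
  apply/find_iotaP; first lia; split.
    move=> j hj; have := h1 (b + 1 + j) ltac:(lia).
    rewrite -(occ_addK c (1 + j)).
    by have -> : K - b + (b + 1 + j) = K + (1 + j) by lia.
  move: h2; rewrite -(occ_addK c (1 + _)).
  by have -> : K + (1 + (L - b - 1)) = K - b + L by lia.
rewrite (eqP hW); apply/eqP; lia.
Qed.

Local Open Scope ring_scope.

Lemma prob_rot (R : numDomainType) K (P : {ffun config K -> R})
  (hK : (0 < K)%N) (P_rot : forall c, P (rotc c) = P c) (Q : pred (config K)) :
  prob P Q = prob P (fun c => Q (rotc c)).
Proof.
rewrite /prob (reindex_inj (rotc_inj hK)) /=.
by apply: eq_bigr => c _; rewrite P_rot.
Qed.

Lemma prob_ext (R : numDomainType) K (P : {ffun config K -> R}) (Q1 Q2 : pred (config K)) :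
  Q1 =1 Q2 -> prob P Q1 = prob P Q2.
Proof. by move=> h; rewrite /prob; apply: eq_bigl. Qed.

Lemma prob_shift (R : numDomainType) K (P : {ffun config K -> R})
  (hK : (0 < K)%N) (P_rot : forall c, P (rotc c) = P c)
  (Q : nat -> pred (config K)) (hQ : forall s c, Q s (rotc c) = Q s.+1 c) s :
  prob P (Q s) = prob P (Q 0%N).
Proof.
elim: s => // s IH; rewrite -IH (prob_rot hK P_rot (Q s)).
by apply: prob_ext => c; rewrite hQ.
Qed.

Theorem proposition4p2 (R : realFieldType) (K : nat) (hK : (2 <= K)%N)
  (P : {ffun config K -> R})
  (P_ge0 : forall c, 0 <= P c)
  (P_sum1 : \sum_(c : config K) P c = 1)
  (P_rot : forall c, P (rotc c) = P c)
  (M_pos : 0 < M P) :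
  forall L : nat, (1 <= L <= K)%N ->
    - (g P L.+1 - g P L) * L%:R = f1 P L /\
    - (g P L.+1 - g P L) = M P * f2 P L.
Proof.
move=> L /andP[L1 LK].
have K0 : (0 < K)%N by lia.
set X := prob P (F 0 L).
have hg : g P L = X + g P L.+1.
  rewrite /g (prob_ext P (Q2 := E 0 L)); last by move=> c; rewrite W_E // L1.
  rewrite /prob (bigID (fun c => occ c 0)) /=; congr (_ + _).
  have -> : \sum_(i | E 0 L i && ~~ occ i 0) P i = prob P (E (K.-1) L.+1).
    apply: eq_bigl => c; apply/andP/EP.
      case=> /EP [h1 h2] h3; split.
        move=> j hj; case: (j =P 1%N) => [->|j1].
          by rewrite -occ_mod; have -> : ((K.-1 + 1) %% K = 0)%N by rewrite addn1 prednK // modnn.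
        have -> : (K.-1 + j = K + (0 + j.-1))%N by lia.
        by rewrite occ_addK; apply: h1; lia.
      have -> : (K.-1 + L.+1 = K + (0 + L))%N by lia.
      by rewrite occ_addK.
    case=> h1 h2; split; last first.
      by have := h1 1%N ltac:(lia); rewrite -occ_mod; have -> : ((K.-1 + 1) %% K = 0)%N by rewrite addn1 prednK // modnn.
    apply/EP; split.
      move=> j hj; have := h1 j.+1 ltac:(lia).
      have -> : (K.-1 + j.+1 = K + (0 + j))%N by lia.
      by rewrite occ_addK.
    move: h2; have -> : (K.-1 + L.+1 = K + (0 + L))%N by lia.
    by rewrite occ_addK.
  rewrite (prob_shift K0 P_rot (Q := fun s => E s L.+1)) /=; last by move=> s c; rewrite E_rot.
  case: (ltnP L K) => hLK.
    by apply: prob_ext => c; rewrite W_E //; lia.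
  have -> : L = K by lia.
  rewrite /prob big1; last by move=> c; rewrite E_K1.
  by rewrite big_pred0 // => c; apply/negP => /andP[ne /eqP hW]; have := W_le K0 ne; rewrite hW ltnn.
have hX : - (g P L.+1 - g P L) = X by rewrite hg opprB addrK.
rewrite hX; split.
  rewrite /f1 /prob.
  rewrite /X; clear hg hX X; case: L L1 LK => // L _ LK.
  rewrite (partition_big (fun c => inord (back_dist c) : 'I_L.+1) xpredT) //=.
  under eq_bigr => b _.
    rewrite (eq_bigl (F (K - b) L.+1)); last first.
      move=> c; rewrite -Sp1_F //.
      case hS: (nonempty c && (Sp1 c == L.+1)) => //=.
      case/andP: hS => _ /back_lt hb.
      apply/eqP/eqP => [e|e]; first by rewrite -e inordK.
      by apply: val_inj; rewrite /= e inordK.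
    over.
  rewrite /=.
  have hF : forall s, prob P (F s L.+1) = prob P (F 0 L.+1).
    move=> s; apply: (prob_shift K0 P_rot (Q := fun s => F s L.+1)).
    by move=> s' c; exact: F_rot.
  rewrite (eq_bigr (fun _ => prob P (F 0 L.+1))); last by move=> b _; exact: hF.
  by rewrite sumr_const card_ord mulr_natr.
have M0 : M P != 0 by rewrite gt_eqF.
rewrite /f2 mulrC divfK //; apply: prob_ext => c.
rewrite /F -(occ_mod c K) modnn.
have -> : Sp2 c = W c by rewrite /Sp2 /W; congr (_.+1); apply: eq_find => a; rewrite occ_addK.
rewrite -W_E ?L1 //.
case h: (occ c 0) => /=; rewrite ?andbF ?andbT //.
by rewrite (nonempty_occ K0 h).
Qed.
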